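(* The set of all $P^0\in L\cap\Delta^{n-1}_+$ satisfying $\bigl(P^0+\mathbf{Q}(P^0,P^* )\bigr)\cap L=\{P^0\}$ equals $$\bigcup\Bigl\{L\cap\mathcal{C}_\sigma\cap\Delta^{n-1}_+\ :\ \sigma \text{ a surjection } \{1,\dots,n\}\to\{1,\dots,k'+1\},\ 0\le k'\le n-1,\ L\cap\mathcal{C}_\sigma\neq\emptyset,\ L^0\cap Q_\sigma=\{0\}\Bigr\}.$$ Moreover, $\mathbf{Q}(P,P^* )=Q_\sigma$ for every $P\in\mathcal{C}_\sigma$.
   Context: Fix $n\ge 2$ and $P^*=(p^*_i)$ with $p^*_i>0$, $\sum_i p^*_i=1$; $\Delta^{n-1}_+=\{P\in\mathbb{R}^n: p_i>0,\ \sum_i p_i=1\}$. For $i\neq j$, $\gamma^{ji}=-\gamma^{ij}$ is the vector with $\gamma^{ji}_j=-1$, $\gamma^{ji}_i=1$, other coordinates $0$; ${\rm cone}$ denotes non-negative linear combinations; ${\rm sign}$ is three-valued; $\mathbf{Q}(P,P^* )={\rm cone}\{\gamma^{ji}\,{\rm sign}(\tfrac{p_j}{p^*_j}-\tfrac{p_i}{p^*_i}) : 1\le j<i\le n\}$. For a surjection $\sigma:\{1,\dots,n\}\to\{1,\dots,k'+1\}$: $\mathcal{C}_\sigma=\{P\in\Delta^{n-1}:\ \frac{p_i}{p^*_i}=\frac{p_j}{p^*_j}$ if $\sigma(i)=\sigma(j)$, and $\frac{p_i}{p^*_i}>\frac{p_j}{p^*_j}$ if $\sigma(j)=\sigma(i)+1\}$,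 and $Q_\sigma={\rm cone}\{\gamma^{ij}:\ \sigma(j)=\sigma(i)+1\}$. The condition manifold is $L=\{P:\ \sum_j m_{rj}p_j=M_r,\ r=0,\dots,k\}$ with $m_{0j}=1$, $M_0=1$, $L\cap\Delta^{n-1}_+\ne\emptyset$, and $L^0=\{x\in\mathbb{R}^n:\ \sum_j m_{rj}x_j=0,\ r=0,\dots,k\}$. *)

(* Defs.v *)
(* vectors in R^n are row vectors 'rV[R]_n over an arbitrary
   real field R; indices {1..n} are rendered as 'I_n = {0..n-1}. *)
From HB Require Import structures.
From mathcomp Require Import all_boot all_order all_algebra.
Set Implicit Arguments. Unset Strict Implicit. Unset Printing Implicit Defensive.
Import Order.TTheory GRing.Theory Num.Theory.
Local Open Scope ring_scope.

Section Defs.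
Variables (R : realFieldType) (n : nat).

Definition co (P : 'rV[R]_n) (j : 'I_n) : R := P 0 j.

(* gamma a b : coordinate a equal to -1, coordinate b equal to 1, others 0.
   So gamma j i is the paper's gamma^{ji}, and gamma i j = - gamma j i. *)
Definition gamma (a b : 'I_n) : 'rV[R]_n :=
  \row_l (((l == b)%:R : R) - (l == a)%:R).

Definition in_cone (I : finType) (Pr : pred I) (g : I -> 'rV[R]_n)
  (x : 'rV[R]_n) : Prop :=
  exists c : I -> R, (forall i, 0 <= c i) /\ x = \sum_(i | Pr i) c i *: g i.

Definition simplex (P : 'rV[R]_n) : Prop :=
  (forall i, 0 <= co P i) /\ \sum_i co P i = 1.

Definition simplex_pos (P : 'rV[R]_n) : Prop :=
  (forall i, 0 < co P i) /\ \sum_i co P i = 1.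

Definition Qcone (P Ps : 'rV[R]_n) : 'rV[R]_n -> Prop :=
  in_cone (fun ji : 'I_n * 'I_n => (ji.1 < ji.2)%N)
    (fun ji => Num.sg (co P ji.1 / co Ps ji.1 - co P ji.2 / co Ps ji.2)
               *: gamma ji.1 ji.2).

Definition Csigma (Ps : 'rV[R]_n) (k' : nat) (sigma : 'I_n -> 'I_k'.+1)
  (P : 'rV[R]_n) : Prop :=
  simplex P /\
  (forall i j, sigma i = sigma j -> co P i / co Ps i = co P j / co Ps j) /\
  (forall i j, val (sigma j) = (val (sigma i)).+1 ->
       co P i / co Ps i > co P j / co Ps j).

Definition Qsigma (k' : nat) (sigma : 'I_n -> 'I_k'.+1) : 'rV[R]_n -> Prop :=
  in_cone (fun ij : 'I_n * 'I_n => val (sigma ij.2) == (val (sigma ij.1)).+1)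
    (fun ij => gamma ij.1 ij.2).

Definition inL (k : nat) (m : 'M[R]_(k.+1, n)) (M : 'I_k.+1 -> R)
  (P : 'rV[R]_n) : Prop :=
  forall r, \sum_j m r j * co P j = M r.

Definition inL0 (k : nat) (m : 'M[R]_(k.+1, n)) (x : 'rV[R]_n) : Prop :=
  forall r, \sum_j m r j * co x j = 0.

End Defs.

Definition surj (A B : finType) (f : A -> B) : Prop := forall b, exists a, f a = b.

(* Main.v *)
Require Import Defs.
From HB Require Import structures.
From mathcomp Require Import all_boot all_order all_algebra.
From mathcomp Require Import ring lra zify.
Import Order.TTheory GRing.Theory Num.Theory.
Local Open Scope ring_scope.

Section Aux.
Set Implicit Arguments. Unset Strict Implicit.
Variables (R : realFieldType) (n : nat).

Lemma cone0 (I : finType) (Pr : pred I) (g : I -> 'rV[R]_n) : in_cone Pr g 0.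
Proof. exists (fun=> 0); split=> //; by rewrite big1 // => i _; rewrite scale0r. Qed.

Lemma coneD (I : finType) (Pr : pred I) (g : I -> 'rV[R]_n) x y :
  in_cone Pr g x -> in_cone Pr g y -> in_cone Pr g (x + y).
Proof.
move=> [c1 [h1 ->]] [c2 [h2 ->]]; exists (fun i => c1 i + c2 i); split.
  by move=> i; rewrite addr_ge0.
by rewrite -big_split /=; apply: eq_bigr => i _; rewrite scalerDl.
Qed.

Lemma coneZ (I : finType) (Pr : pred I) (g : I -> 'rV[R]_n) a x :
  0 <= a -> in_cone Pr g x -> in_cone Pr g (a *: x).
Proof.
move=> ha [c [h ->]]; exists (fun i => a * c i); split.
  by move=> i; rewrite mulr_ge0.
by rewrite scaler_sumr; apply: eq_bigr => i _; rewrite scalerA.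
Qed.

Lemma cone_gen (I : finType) (Pr : pred I) (g : I -> 'rV[R]_n) (i : I) v :
  Pr i -> g i = v -> in_cone Pr g v.
Proof.
move=> Hi <-; exists (fun j => (j == i)%:R); split.
  by move=> j; rewrite ler0n.
rewrite (bigD1 i) //= eqxx scale1r big1 ?addr0 // => j /andP [_ /negbTE ->].
by rewrite scale0r.
Qed.

Lemma cone_trans (I J : finType) (Pr : pred I) (Pr' : pred J)
   (g : I -> 'rV[R]_n) (g' : J -> 'rV[R]_n) x :
  in_cone Pr g x -> (forall i, Pr i -> in_cone Pr' g' (g i)) -> in_cone Pr' g' x.
Proof.
move=> [c [hc ->]] hg.
apply: (big_ind (in_cone Pr' g')); first exact: cone0.
  by move=> ? ?; apply: coneD.
by move=> i Hi; apply: coneZ => //; apply: hg.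
Qed.

Lemma gammaD (i l j : 'I_n) : gamma R i l + gamma R l j = gamma R i j.
Proof. apply/rowP => t; rewrite !mxE; ring. Qed.

Lemma gammaN (i j : 'I_n) : gamma R j i = - gamma R i j.
Proof. apply/rowP => t; rewrite !mxE; ring. Qed.

Section Part2.
Variables (k' : nat) (sigma : 'I_n -> 'I_k'.+1) (r : 'I_n -> R).
Hypothesis surjs : surj sigma.
Hypothesis HA : forall i j, sigma i = sigma j -> r i = r j.
Hypothesis HB : forall i j, val (sigma j) = (val (sigma i)).+1 -> r i > r j.

Lemma chain d : forall i j, val (sigma j) = (val (sigma i) + d.+1)%N ->
  r j < r i /\ Qsigma sigma (gamma R i j).
Proof.
elim: d => [|d IH] i j hij.
  rewrite addn1 in hij; split; first exact: HB.
  by apply: (@cone_gen _ _ _ (i, j)) => //=; rewrite hij.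
have hl : ((val (sigma i)).+1 < k'.+1)%N.
  have := ltn_ord (sigma j); rewrite hij; lia.
have [l hl'] := surjs (Ordinal hl).
have hsl : val (sigma l) = (val (sigma i)).+1 by rewrite hl'.
have [h1 h2] := IH l j (ltac:(rewrite hij hsl; lia)).
split; first by apply: lt_trans h1 _; apply: HB.
rewrite -(gammaD i l j); apply: coneD => //.
by apply: (@cone_gen _ _ _ (i, l)) => //=; rewrite hsl.
Qed.

Lemma lt_chain i j : (val (sigma i) < val (sigma j))%N ->
  r j < r i /\ Qsigma sigma (gamma R i j).
Proof.
move=> h; apply: (@chain ((val (sigma j) - val (sigma i)).-1) i j); lia.
Qed.

Lemma sig_lt i j : r j < r i -> (val (sigma i) < val (sigma j))%N.
Proof.
move=> h; case: (ltngtP (val (sigma i)) (val (sigma j))) => // [hji|e].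
  have [h' _] := lt_chain hji; by have := lt_trans h h'; rewrite ltxx.
have := HA (val_inj e); move=> e'; by rewrite e' ltxx in h.
Qed.

Lemma part2_gen x :
  in_cone (fun ji : 'I_n * 'I_n => (ji.1 < ji.2)%N)
    (fun ji => Num.sg (r ji.1 - r ji.2) *: gamma R ji.1 ji.2) x
  <-> Qsigma sigma x.
Proof.
split=> hx; apply: (cone_trans hx).
  move=> [a b] /= hab; case: (ltgtP (r a) (r b)) => h.
  - rewrite ltr0_sg ?subr_lt0 // scaleN1r -gammaN.
    by have [_] := lt_chain (sig_lt h).
  - rewrite gtr0_sg ?subr_gt0 // scale1r.
    by have [_] := lt_chain (sig_lt h).
  - by rewrite h subrr sgr0 scale0r; apply: cone0.
move=> [i j] /= /eqP hij; have hr := HB hij.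
case: (ltngtP i j) => [lij|lji|eij].
- by apply: (@cone_gen _ _ _ (i, j)) => //=; rewrite gtr0_sg ?subr_gt0 // scale1r.
- apply: (@cone_gen _ _ _ (j, i)) => //=.
  by rewrite ltr0_sg ?subr_lt0 // scaleN1r gammaN opprK.
- have e : i = j by apply: val_inj.
  by rewrite e ltxx in hr.
Qed.
End Part2.

Lemma count_lt (T : eqType) (p q : pred T) (s : seq T) x0 :
  (forall x, p x -> q x) -> x0 \in s -> q x0 -> ~~ p x0 -> (count p s < count q s)%N.
Proof.
move=> pq; elim: s => //= y s IH; rewrite in_cons => /orP [/eqP ->|hx] hq hp.
  rewrite hq (negbTE hp) add0n add1n ltnS; apply: sub_count => z; exact: pq.
have := IH hx hq hp; case: (p y) (pq y) => [/(_ isT) -> /=|_]; lia.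
Qed.

Lemma rank_sigma (r : 'I_n -> R) : (0 < n)%N ->
  exists (k' : nat) (sigma : 'I_n -> 'I_k'.+1), (k' <= n - 1)%N /\ surj sigma /\
   (forall i j, sigma i = sigma j -> r i = r j) /\
   (forall i j, val (sigma j) = (val (sigma i)).+1 -> r i > r j).
Proof.
move=> n0.
set vals := undup [seq r i | i <- enum 'I_n].
pose rk := fun v => count (fun w => v < w) vals.
have inv i : r i \in vals by rewrite mem_undup map_f ?mem_enum.
have rk_lt v w : v < w -> w \in vals -> (rk w < rk v)%N.
  move=> vw wv; apply: (count_lt (x0 := w)) => //; last by rewrite ltxx.
  move=> u; exact: lt_trans.
have rk_s v : v \in vals -> (rk v < size vals)%N.
  move=> hv; rewrite /rk -[X in (_ < X)%N](count_predT vals).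
  by apply: (count_lt (x0 := v)) => //; rewrite ltxx.
have s0 : (0 < size vals)%N.
  rewrite lt0n size_eq0; apply/eqP => e; have := inv (Ordinal n0); by rewrite e.
have rk_inj v w : v \in vals -> w \in vals -> rk v = rk w -> v = w.
  move=> hv hw e; case: (ltgtP v w) => // h.
    by have := rk_lt _ _ h hw; rewrite e ltnn.
  by have := rk_lt _ _ h hv; rewrite e ltnn.
pose k' := (size vals).-1.
have ks : k'.+1 = size vals by rewrite /k' prednK.
pose sigma := fun i => (inord (rk (r i)) : 'I_k'.+1).
have sigmaE i : val (sigma i) = rk (r i) by rewrite /sigma /= inordK // ks rk_s.
exists k', sigma; split; [|split; [|split]].
- rewrite /k' -subn1 leq_sub2r // (leq_trans (size_undup _)) //.
  by rewrite size_map size_enum_ord.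
- move=> b.
  pose f := fun a : 'I_k'.+1 => (inord (rk (nth 0 vals a)) : 'I_k'.+1).
  have fE a : val (f a) = rk (nth 0 vals a).
    have ha : (a < size vals)%N by rewrite -ks.
    have h : (rk (nth 0%R vals a) < k'.+1)%N.
      by rewrite [X in (_ < X)%N]ks rk_s // mem_nth.
    by rewrite /f /= inordK.
  have finj : injective f.
    move=> a a' /(congr1 val); rewrite !fE => e.
    have ha : (a < size vals)%N by rewrite -ks.
    have ha' : (a' < size vals)%N by rewrite -ks.
    apply: val_inj => /=; apply/eqP; rewrite -(nth_uniq 0 ha ha' (undup_uniq _)).
    by apply/eqP; apply: rk_inj => //; exact: mem_nth.
  have [g fg gf] := injF_bij finj.
  have : nth 0 vals (g b) \in vals by apply: mem_nth; rewrite -ks.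
  rewrite mem_undup => /mapP [i _ ei].
  by exists i; apply: val_inj; rewrite sigmaE -ei -fE gf.
- by move=> i j /(congr1 val); rewrite !sigmaE; apply: rk_inj.
- move=> i j; rewrite !sigmaE => e; case: (ltgtP (r i) (r j)) => // h.
    by have := rk_lt _ _ h (inv j); rewrite e; lia.
  by rewrite h in e; lia.
Qed.

Lemma inL_add k (m : 'M[R]_(k.+1, n)) M (P q : 'rV[R]_n) :
  inL m M P -> (inL m M (P + q) <-> inL0 m q).
Proof.
move=> hP; have E r : \sum_j m r j * co (P + q) j = M r + \sum_j m r j * co q j.
  rewrite -(hP r) -big_split /=; apply: eq_bigr => j _; by rewrite /co mxE mulrDr.
split=> h r.
  have := h r; rewrite E => e; apply: (addrI (M r)); by rewrite addr0.
by rewrite /inL E h addr0.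
Qed.

Lemma inL0_0 k (m : 'M[R]_(k.+1, n)) : inL0 m 0.
Proof. by move=> r; rewrite big1 // => j _; rewrite /co mxE mulr0. Qed.

End Aux.

Theorem mainTheorem10 (R : realFieldType) (n : nat) (Ps : 'rV[R]_n)
  (k : nat) (m : 'M[R]_(k.+1, n)) (M : 'I_k.+1 -> R) :
  (2 <= n)%N ->
  simplex_pos Ps ->
  (forall j, m ord0 j = 1) -> M ord0 = 1 ->
  (exists P, inL m M P /\ simplex_pos P) ->
  (forall P0 : 'rV[R]_n,
     (inL m M P0 /\ simplex_pos P0 /\
      (forall x, ((exists q, Qcone P0 Ps q /\ x = P0 + q) /\ inL m M x)
                 <-> x = P0))
     <->
     (exists (k' : nat) (sigma : 'I_n -> 'I_k'.+1),
        (k' <= n - 1)%N /\ surj sigma /\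
        (exists P, inL m M P /\ Csigma Ps sigma P) /\
        (forall x, (inL0 m x /\ Qsigma sigma x) <-> x = 0) /\
        inL m M P0 /\ Csigma Ps sigma P0 /\ simplex_pos P0))
  /\
  (forall (k' : nat) (sigma : 'I_n -> 'I_k'.+1), surj sigma ->
     forall P, Csigma Ps sigma P ->
       forall x, Qcone P Ps x <-> Qsigma sigma x).
Proof.
move=> Hn HPs Hm0 HM0 Hex.
have part2 : forall (k' : nat) (sigma : 'I_n -> 'I_k'.+1), surj sigma ->
     forall P, Csigma Ps sigma P -> forall x, Qcone P Ps x <-> Qsigma sigma x.
  move=> k' sigma hs P [_ [hA hB]] x; exact: (part2_gen hs hA hB).
split=> // P0; split.
- move=> [hL [hpos hQ]].
  have [k' [sigma [hk [hs [hA hB]]]]] :=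
    rank_sigma (fun i => co P0 i / co Ps i) (ltnW Hn).
  have hC : Csigma Ps sigma P0.
    split; last by split.
    by case: hpos => h1 h2; split=> // i; apply: ltW.
  exists k', sigma; split=> //; split=> //; split; first by exists P0.
  split=> //; move=> x; split.
    move=> [h0 hq].
    have e : P0 + x = P0.
      apply/(hQ (P0 + x)); split; last by apply/inL_add.
      by exists x; split => //; apply/(part2 _ _ hs _ hC).
    by apply: (addrI P0); rewrite addr0.
  move=> ->; split; first exact: inL0_0.
  exact: cone0.
- move=> [k' [sigma [hk [hs [_ [hL0 [hL [hC hpos]]]]]]]].
  split=> //; split=> // x; split.
    move=> [[q [hq ->]] hx].
    have hq0 : q = 0.
      by apply/hL0; split; [apply/(inL_add _ hL) | apply/(part2 _ _ hs _ hC)].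
    by rewrite hq0 addr0.
  move=> ->; split=> //; exists 0; split; [exact: cone0 | by rewrite addr0].
Qed.
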